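(* Let $\mathbf X=(X_1,\dots,X_r)$ have the UGAT distribution with parameters $n,k,\beta,\overline{\alpha}_r$, with hazard rate components $h_i$ as defined below. Abbreviate $M(\gamma)=M^{(r)}_n(\gamma;k;\overline{\alpha}_r)$, and for $\mathbf x,\mathbf t\in\mathbb N_0^r$ write $X_{\mathbf x}=x_1+\cdots+x_r$, $X'_{\mathbf x}=X_{\mathbf x}+1$ and $T_{\mathbf t}=t_1+\cdots+t_r$. Then the UGAT distribution is MIFR if and only if for all $\mathbf x,\mathbf t\in\mathbb N_0^r$ $$\frac{M(\beta+X'_{\mathbf x}+T_{\mathbf t})}{M(\beta+X_{\mathbf x}+T_{\mathbf t})}\le\frac{M(\beta+X'_{\mathbf x})}{M(\beta+X_{\mathbf x})},$$ and it is MDFR if and only if the reverse inequality $\ge$ holds for all $\mathbf x,\mathbf t\in\mathbb N_0^r$.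
   Context: Fix integers $r\ge1$, $n\ge0$, a real number $k$ with $rk>n$, a real $\beta>0$ and $\overline{\alpha}_r=(\alpha_0,\dots,\alpha_{r-1})\in(0,\infty)^r$. For $\gamma>0$ and a vector $\overline{\alpha}'=(\alpha'_0,\dots,\alpha'_{r-1})$ of positive reals define $$M^{(r)}_n(\gamma;k;\overline{\alpha}')=C\sum_{\ell_1,\dots,\ell_r=0}^{\infty}\frac{(\alpha'_0)^{\ell_1}(\alpha'_1)^{\ell_2}\cdots(\alpha'_{r-1})^{\ell_r}}{(\ell_1+\cdots+\ell_r+\gamma)^{rk-n}},\qquad C=\frac{(-1)^r2^{r(1-k)}n!}{(n-rk)!},$$ where $C$ is regarded as a fixed nonzero real constant not depending on $\gamma$ or $\overline{\alpha}'$, and the parameters are assumed to be such that all series involved converge (e.g. all $\alpha_j<1$). A random vector $\mathbf X=(X_1,\dots,X_r)$ with values in $\mathbb N_0^r$ has the UGAT distribution with parameters $n,k,\beta,\overline{\alpha}_r$ if for all $x_1,\dots,x_r\in\mathbb N_0$ $$P(X_1=x_1,\dots,X_r=x_r)=\frac{C\,\alpha_0^{x_1}\alpha_1^{x_2}\cdots\alpha_{r-1}^{x_r}}{(x_1+\cdots+x_r+\beta)^{rk-n}\,M^{(r)}_n(\beta;k;\overline{\alpha}_r)}.$$ With $R(x_1,\dots,x_r)=P(X_1\ge x_1,\dots,X_r\ge x_r)$, the hazard rate components are $h_i(\mathbf x)=1-R(x_1,\dots,x_i+1,\dots,x_r)/R(x_1,\dots,x_r)$, $i=1,\dots,r$.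 The distribution is MIFR (multivariate increasing failure rate) if $h_i(\mathbf x+\mathbf t)\ge h_i(\mathbf x)$ for all $i$ and all $\mathbf x,\mathbf t\in\mathbb N_0^r$, and MDFR (multivariate decreasing failure rate) if $h_i(\mathbf x+\mathbf t)\le h_i(\mathbf x)$ for all $i$ and all $\mathbf x,\mathbf t\in\mathbb N_0^r$. *)

(* Defs.v *)
From Stdlib Require Import Reals Lra Lia ClassicalEpsilon.
Open Scope R_scope.

(* Points of N_0^r are represented by functions x : nat -> nat; only the
   coordinates x 0, ..., x (r-1) are ever used (coordinate x_{j+1} of the
   paper is x j here). *)

Fixpoint nsum (r : nat) (x : nat -> nat) : nat :=
  match r with O => O | S r' => (nsum r' x + x r')%nat end.

Fixpoint weight (r : nat) (alpha : nat -> R) (x : nat -> nat) : R :=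
  match r with O => 1 | S r' => weight r' alpha x * alpha r' ^ x r' end.

Definition cons_fn (l : nat) (z : nat -> nat) : nat -> nat :=
  fun j => match j with O => l | S j' => z j' end.

(* Finite box partial sum  sum_{z in {0..N}^m} f z  (z j = 0 for j >= m). *)
Fixpoint box (m N : nat) (f : (nat -> nat) -> R) : R :=
  match m with
  | O => f (fun _ => O)
  | S m' => sum_f_R0 (fun l => box m' N (fun z => f (cons_fn l z))) N
  end.

(* Value of a convergent real sequence (the limit; arbitrary otherwise). *)
Definition lim_seq (u : nat -> R) : R :=
  epsilon (inhabits 0) (fun l => Un_cv u l).

(* Value of the r-fold series sum_{z in N_0^r} f z, taken as the limit of
   the box partial sums (for nonnegative terms this is the unordered sum). *)
Definition mseries (r : nat) (f : (nat -> nat) -> R) : R :=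
  lim_seq (fun N => box r N f).

Definition ugat_exp (r n : nat) (k : R) : R := INR r * k - INR n.

(* General term of M^{(r)}_n(gamma;k;alpha') (without the constant C). *)
Definition Mterm (r n : nat) (k : R) (alpha : nat -> R) (gamma : R)
  (z : nat -> nat) : R :=
  weight r alpha z / Rpower (INR (nsum r z) + gamma) (ugat_exp r n k).

Definition Mfun (C : R) (r n : nat) (k : R) (alpha : nat -> R) (gamma : R) : R :=
  C * mseries r (Mterm r n k alpha gamma).

Definition ugat_pmf (C : R) (r n : nat) (k beta : R) (alpha : nat -> R)
  (x : nat -> nat) : R :=
  C * weight r alpha x /
  (Rpower (INR (nsum r x) + beta) (ugat_exp r n k) * Mfun C r n k alpha beta).

Definition addv (x t : nat -> nat) : nat -> nat := fun j => (x j + t j)%nat.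

Definition unitv (i : nat) : nat -> nat := fun j => if Nat.eqb j i then 1%nat else 0%nat.

(* Survival function R(x) = P(X_1 >= x_1, ..., X_r >= x_r) = sum_{z} P(X = x + z). *)
Definition ugat_surv (C : R) (r n : nat) (k beta : R) (alpha : nat -> R)
  (x : nat -> nat) : R :=
  mseries r (fun z => ugat_pmf C r n k beta alpha (addv x z)).

(* Hazard rate component h_i (i = 0..r-1 here, i.e. paper's i+1). *)
Definition hazard (C : R) (r n : nat) (k beta : R) (alpha : nat -> R)
  (i : nat) (x : nat -> nat) : R :=
  1 - ugat_surv C r n k beta alpha (addv x (unitv i)) / ugat_surv C r n k beta alpha x.

Definition MIFR (C : R) (r n : nat) (k beta : R) (alpha : nat -> R) : Prop :=
  forall (i : nat) (x t : nat -> nat), (i < r)%nat ->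
    hazard C r n k beta alpha i x <= hazard C r n k beta alpha i (addv x t).

Definition MDFR (C : R) (r n : nat) (k beta : R) (alpha : nat -> R) : Prop :=
  forall (i : nat) (x t : nat -> nat), (i < r)%nat ->
    hazard C r n k beta alpha i (addv x t) <= hazard C r n k beta alpha i x.

(* Main.v *)
Require Import Defs.
From Stdlib Require Import Reals.
From Stdlib Require Import Lra Lia ClassicalEpsilon.
Open Scope R_scope.

Lemma nsum_add r x z : nsum r (addv x z) = (nsum r x + nsum r z)%nat.
Proof. induction r; simpl; unfold addv in *; lia. Qed.

Lemma weight_add r a x z : weight r a (addv x z) = weight r a x * weight r a z.
Proof. induction r; simpl; [ring|]. rewrite IHr; unfold addv; rewrite pow_add; ring. Qed.

Lemma nsum_unit_ge r i : (r <= i)%nat -> nsum r (unitv i) = 0%nat.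
Proof.
  induction r; simpl; intros; auto. rewrite IHr by lia.
  change (unitv i r) with (if Nat.eqb r i then 1%nat else 0%nat).
  destruct (Nat.eqb_spec r i); lia.
Qed.

Lemma nsum_unit r i : (i < r)%nat -> nsum r (unitv i) = 1%nat.
Proof.
  induction r; intros; [lia|]. simpl.
  change (unitv i r) with (if Nat.eqb r i then 1%nat else 0%nat).
  destruct (Nat.eqb_spec r i). subst; rewrite nsum_unit_ge; lia. rewrite IHr by lia; lia.
Qed.

Lemma weight_unit_ge r a i : (r <= i)%nat -> weight r a (unitv i) = 1.
Proof.
  induction r; simpl; intros; auto. rewrite IHr by lia.
  change (unitv i r) with (if Nat.eqb r i then 1%nat else 0%nat).
  destruct (Nat.eqb_spec r i); [lia|]. simpl; ring.
Qed.

Lemma weight_unit r a i : (i < r)%nat -> weight r a (unitv i) = a i.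
Proof.
  induction r; intros; [lia|]. simpl.
  change (unitv i r) with (if Nat.eqb r i then 1%nat else 0%nat).
  destruct (Nat.eqb_spec r i). subst; rewrite weight_unit_ge by lia; simpl; ring.
  rewrite IHr by lia; simpl; ring.
Qed.

Lemma weight_pos r a z : (forall j, (j < r)%nat -> 0 < a j) -> 0 < weight r a z.
Proof.
  induction r; simpl; intros; [lra|]. apply Rmult_lt_0_compat.
  apply IHr; intros; apply H; lia. apply pow_lt; apply H; lia.
Qed.

Lemma box_ext m N f g : (forall z, f z = g z) -> box m N f = box m N g.
Proof.
  revert f g; induction m; intros f g H; simpl; [apply H|].
  apply sum_eq; intros; apply IHm; intros; apply H.
Qed.

Lemma box_scal m N c f : box m N (fun z => c * f z) = c * box m N f.
Proof.
  revert f; induction m; intros f; simpl; auto.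
  transitivity (sum_f_R0 (fun l => box m N (fun z => f (cons_fn l z)) * c) N).
  apply sum_eq; intros. rewrite (IHm (fun z => f (cons_fn i z))); ring.
  rewrite <- scal_sum; ring.
Qed.

Lemma sum_pos g N : (forall l, 0 < g l) -> 0 < sum_f_R0 g N.
Proof.
  intros H; induction N; simpl; [apply H|]. specialize (H (S N)); lra.
Qed.

Lemma box_pos m N f : (forall z, 0 < f z) -> 0 < box m N f.
Proof.
  revert f; induction m; intros f H; simpl; [apply H|].
  apply sum_pos; intros; apply IHm; intros; apply H.
Qed.

Lemma box_mono m N f : (forall z, 0 < f z) -> box m N f <= box m (S N) f.
Proof.
  revert f; induction m; intros f H; [simpl; lra|].
  change (sum_f_R0 (fun l => box m N (fun z => f (cons_fn l z))) N <=
          sum_f_R0 (fun l => box m (S N) (fun z => f (cons_fn l z))) N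
          + box m (S N) (fun z => f (cons_fn (S N) z))).
  assert (0 < box m (S N) (fun z => f (cons_fn (S N) z))) by (apply box_pos; intros; apply H).
  assert (sum_f_R0 (fun l => box m N (fun z => f (cons_fn l z))) N <=
          sum_f_R0 (fun l => box m (S N) (fun z => f (cons_fn l z))) N).
  apply sum_Rle; intros; apply IHm; intros; apply H. lra.
Qed.

Lemma lim_unique u l : Un_cv u l -> lim_seq u = l.
Proof.
  intros H. unfold lim_seq.
  pose proof (epsilon_spec (inhabits 0) (fun l => Un_cv u l) (ex_intro _ l H)).
  eapply UL_sequence; eauto.
Qed.

Lemma cv_const c : Un_cv (fun _ => c) c.
Proof. intros e He; exists 0%nat; intros; rewrite R_dist_eq; auto. Qed.

Lemma mseries_pos r f l : (forall z, 0 < f z) -> Un_cv (fun N => box r N f) l -> 0 < mseries r f.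
Proof.
  intros H Hl. unfold mseries. rewrite (lim_unique _ _ Hl).
  apply Rlt_le_trans with (box r 0 f). apply box_pos; auto.
  apply (growing_ineq (fun N => box r N f)); auto.
  intro N; apply box_mono; auto.
Qed.

Lemma mseries_scal r c f l : Un_cv (fun N => box r N f) l ->
  mseries r (fun z => c * f z) = c * mseries r f.
Proof.
  intros Hl. unfold mseries. rewrite (lim_unique _ _ Hl).
  apply lim_unique.
  eapply Un_cv_ext.
  2: apply (CV_mult _ _ _ _ (cv_const c) Hl).
  intros N; simpl; rewrite box_scal; auto.
Qed.

Lemma Rpower_pos' x y : 0 < Rpower x y.
Proof. unfold Rpower; apply exp_pos. Qed.

Lemma Mterm_pos r n k alpha g z : (forall j, (j < r)%nat -> 0 < alpha j) ->
  0 < Mterm r n k alpha g z.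
Proof.
  intros H; unfold Mterm. apply Rdiv_lt_0_compat. apply weight_pos; auto. apply Rpower_pos'.
Qed.

Lemma surv_eq C r n k beta alpha x
  (hbeta : 0 < beta)
  (halpha : forall j : nat, (j < r)%nat -> 0 < alpha j)
  (hC : C <> 0)
  (hconv : forall gamma : R, 0 < gamma ->
     exists l : R, Un_cv (fun N => box r N (Mterm r n k alpha gamma)) l) :
  ugat_surv C r n k beta alpha x =
  weight r alpha x * mseries r (Mterm r n k alpha (beta + INR (nsum r x)))
    / mseries r (Mterm r n k alpha beta).
Proof.
  destruct (hconv beta hbeta) as [l0 Hl0].
  assert (Hg : 0 < beta + INR (nsum r x)) by (pose proof (pos_INR (nsum r x)); lra).
  destruct (hconv _ Hg) as [l1 Hl1].
  assert (HS : 0 < mseries r (Mterm r n k alpha beta))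
    by (eapply mseries_pos; eauto; intros; apply Mterm_pos; auto).
  unfold ugat_surv.
  assert (E : forall z, ugat_pmf C r n k beta alpha (addv x z) =
     (weight r alpha x / mseries r (Mterm r n k alpha beta)) *
     Mterm r n k alpha (beta + INR (nsum r x)) z).
  { intros z. unfold ugat_pmf, Mfun. set (S0 := mseries r (Mterm r n k alpha beta)) in *. unfold Mterm. rewrite nsum_add, weight_add, plus_INR.
    replace (INR (nsum r x) + INR (nsum r z) + beta) with (INR (nsum r z) + (beta + INR (nsum r x))) by ring.
    pose proof (Rpower_pos' (INR (nsum r z) + (beta + INR (nsum r x))) (ugat_exp r n k)).
    field. repeat split; try lra; auto. }
  transitivity (weight r alpha x / mseries r (Mterm r n k alpha beta) * l1).
  { unfold mseries at 1. apply lim_unique.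
    eapply Un_cv_ext.
    2: apply (CV_mult _ _ _ _ (cv_const (weight r alpha x / mseries r (Mterm r n k alpha beta))) Hl1).
    intros N; simpl. rewrite (box_ext r N _ _ E), box_scal; auto. }
  replace (mseries r (Mterm r n k alpha (beta + INR (nsum r x)))) with l1.
  field. lra.
  symmetry; unfold mseries; apply lim_unique; auto.
Qed.

Lemma hazard_eq C r n k beta alpha i x
  (hbeta : 0 < beta)
  (halpha : forall j : nat, (j < r)%nat -> 0 < alpha j)
  (hC : C <> 0)
  (hconv : forall gamma : R, 0 < gamma ->
     exists l : R, Un_cv (fun N => box r N (Mterm r n k alpha gamma)) l)
  (hi : (i < r)%nat) :
  hazard C r n k beta alpha i x =
  1 - alpha i * (Mfun C r n k alpha (beta + INR (nsum r x) + 1) /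
                 Mfun C r n k alpha (beta + INR (nsum r x))).
Proof.
  unfold hazard. rewrite !(surv_eq C r n k beta alpha) by auto.
  rewrite nsum_add, weight_add, nsum_unit, weight_unit, plus_INR by auto.
  assert (Hg : forall g, 0 < g -> 0 < mseries r (Mterm r n k alpha g)).
  { intros g Hg; destruct (hconv g Hg) as [l Hl]; eapply mseries_pos; eauto.
    intros; apply Mterm_pos; auto. }
  pose proof (pos_INR (nsum r x)).
  pose proof (Hg beta hbeta).
  assert (0 < mseries r (Mterm r n k alpha (beta + INR (nsum r x)))) by (apply Hg; lra).
  assert (0 < mseries r (Mterm r n k alpha (beta + INR (nsum r x) + 1))) by (apply Hg; lra).
  assert (0 < weight r alpha x) by (apply weight_pos; auto).
  unfold Mfun. simpl INR. replace (beta + (INR (nsum r x) + 1)) with (beta + INR (nsum r x) + 1) by ring.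
  field. repeat split; try lra; auto.
Qed.

Theorem mainTheorem10 (C : R) (r n : nat) (k beta : R) (alpha : nat -> R)
  (hr : (1 <= r)%nat)
  (hrk : INR n < INR r * k)
  (hbeta : 0 < beta)
  (halpha : forall j : nat, (j < r)%nat -> 0 < alpha j)
  (hC : C <> 0)
  (hconv : forall gamma : R, 0 < gamma ->
     exists l : R, Un_cv (fun N => box r N (Mterm r n k alpha gamma)) l) :
  let M := Mfun C r n k alpha in
  (MIFR C r n k beta alpha <->
     forall x t : nat -> nat,
       M (beta + INR (nsum r x) + 1 + INR (nsum r t)) / M (beta + INR (nsum r x) + INR (nsum r t))
       <= M (beta + INR (nsum r x) + 1) / M (beta + INR (nsum r x))) /\
  (MDFR C r n k beta alpha <->
     forall x t : nat -> nat,
       M (beta + INR (nsum r x) + 1) / M (beta + INR (nsum r x))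
       <= M (beta + INR (nsum r x) + 1 + INR (nsum r t)) / M (beta + INR (nsum r x) + INR (nsum r t))).
Proof.
  intros M.
  assert (HA : forall x t, beta + INR (nsum r (addv x t)) = beta + INR (nsum r x) + INR (nsum r t))
    by (intros; rewrite nsum_add, plus_INR; ring).
  assert (HB : forall x t, beta + INR (nsum r (addv x t)) + 1 = beta + INR (nsum r x) + 1 + INR (nsum r t))
    by (intros; rewrite nsum_add, plus_INR; ring).
  assert (H0 : (0 < r)%nat) by lia.
  unfold MIFR, MDFR; split; split.
  - intros H x t. specialize (H 0%nat x t H0).
    rewrite !hazard_eq in H by auto. rewrite HB, HA in H. fold M in H.
    pose proof (halpha 0%nat H0).
    apply Rmult_le_reg_l with (alpha 0%nat); auto. lra.
  - intros H i x t hi. rewrite !hazard_eq by auto. rewrite HB, HA. fold M.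
    pose proof (halpha i hi). specialize (H x t).
    assert (alpha i * (M (beta + INR (nsum r x) + 1 + INR (nsum r t)) / M (beta + INR (nsum r x) + INR (nsum r t)))
      <= alpha i * (M (beta + INR (nsum r x) + 1) / M (beta + INR (nsum r x)))) by (apply Rmult_le_compat_l; lra).
    lra.
  - intros H x t. specialize (H 0%nat x t H0).
    rewrite !hazard_eq in H by auto. rewrite HB, HA in H. fold M in H.
    pose proof (halpha 0%nat H0).
    apply Rmult_le_reg_l with (alpha 0%nat); auto. lra.
  - intros H i x t hi. rewrite !hazard_eq by auto. rewrite HB, HA. fold M.
    pose proof (halpha i hi). specialize (H x t).
    assert (alpha i * (M (beta + INR (nsum r x) + 1) / M (beta + INR (nsum r x)))
      <= alpha i * (M (beta + INR (nsum r x) + 1 + INR (nsum r t)) / M (beta + INR (nsum r x) + INR (nsum r t)))) by (apply Rmult_le_compat_l; lra).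
    lra.
Qed.
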